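(* The sub-set-operad of $\mathrm{RWS}$ generated by $A_\mu$, $A_\prec$, $A_\succ$ consists exactly of the recursively labelled red and white trees having no node with empty label set.
   Context: Red and white trees: $\mathrm{RW}(n)$ is the set of finite rooted trees (children unordered) whose nodes $z$ carry possibly empty label sets $L(z)\subseteq[n]$ partitioning $[n]$, each empty node having at least two children; labelled nodes are white, an empty node is red iff all its children are white. Composition $T_1\circ_xT_2$ ($T_1\in\mathrm{RW}(m)$, $T_2\in\mathrm{RW}(n)$): relabel $T_1$ by $y\mapsto y+n-1$ for $y>x$ and $T_2$ by $y\mapsto y+x-1$; $z\ni x$ in $T_1$, $r$ = root of $T_2$. (W) $r$ not red: remove $x$ from $L(z)$, add $L(r)$ to $L(z)$, children of $r$ become children of $z$. (R1) $r$ red, $T_1$ the single node $\{x\}$: result $T_2$. (R2) $r$ red and ($z$ has a child or $|L(z)|\ge2$): remove $x$ from $L(z)$, attach $T_2$ as child subtree of $z$. (R3) $r$ red, $z$ non-root leaf with $L(z)=\{x\}$: delete $z$, children of $r$ become children of the parent of $z$. Colours recomputed. A tree is recursively labelled if for each node the union of label sets in its subtree is an interval of integers. $\mathrm{RWS}$ is the sub-set-operad generated by $A_\mu$ (single node $\{1,2\}$), $A_\prec$ (root $\{1\}$ with child $\{2\}$), $A_\succ$ (root $\{2\}$ with child $\{1\}$), $A_\odot$ (empty red root with children $\{1\},\{2\}$). *)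

(* Defs.v *)
(* Red and white trees as raw rooted trees with unordered
   children, identified up to [teq] (permutation of children and of labels). *)
From mathcomp Require Import all_boot.
From Stdlib Require List.

Set Implicit Arguments.
Unset Strict Implicit.
Unset Printing Implicit Defensive.

(* A node carries its label set (a duplicate-free list of labels) and the
   list of its children (order irrelevant up to [teq]). *)
Inductive tree : Type := Node of seq nat & seq tree.

Definition labels (t : tree) : seq nat := let: Node L _ := t in L.
Definition children (t : tree) : seq tree := let: Node _ cs := t in cs.

Inductive teq : tree -> tree -> Prop :=
| teq_node L L' cs cs' :
    perm_eq L L' -> teq_list cs cs' -> teq (Node L cs) (Node L' cs')
with teq_list : seq tree -> seq tree -> Prop :=
| teq_nil : teq_list [::] [::]
| teq_cons c c' cs cs1 cs2 :
    teq c c' -> teq_list cs (cs1 ++ cs2) -> teq_list (c :: cs) (cs1 ++ c' :: cs2).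

Fixpoint all_labels (t : tree) : seq nat :=
  let: Node L cs := t in L ++ flatten (map all_labels cs).

Fixpoint subtrees (t : tree) : seq tree :=
  let: Node _ cs := t in t :: flatten (map subtrees cs).

Definition RW (n : nat) (T : tree) : Prop :=
  perm_eq (all_labels T) (iota 1 n) /\
  (forall s, List.In s (subtrees T) -> labels s = [::] -> 2 <= size (children s)).

Definition is_white (t : tree) : bool := labels t != [::].
Definition is_red (t : tree) : bool :=
  (labels t == [::]) && all is_white (children t).

Fixpoint relabel (g : nat -> nat) (t : tree) : tree :=
  let: Node L cs := t in Node (map g L) (map (relabel g) cs).

Fixpoint at_x (x : nat) (f : seq nat -> seq tree -> tree) (t : tree) : tree :=
  let: Node L cs := t in
  if x \in L then f L cs else Node L (map (at_x x f) cs).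

Definition is_leaf_x (x : nat) (t : tree) : bool :=
  match t with Node [:: y] [::] => y == x | _ => false end.

Fixpoint has_leaf_x (x : nat) (t : tree) : bool :=
  let: Node _ cs := t in has (fun c => is_leaf_x x c || has_leaf_x x c) cs.

(* rule (R3): delete the leaf {x}, children of r go to its parent *)
Fixpoint graft_R3 (x : nat) (rcs : seq tree) (t : tree) : tree :=
  let: Node L cs := t in
  Node L (flatten (map (fun c => if is_leaf_x x c then rcs
                                 else [:: graft_R3 x rcs c]) cs)).

(* partial composition T1 o_x T2, with T1 in RW(m), T2 in RW(n) *)
Definition comp (m x n : nat) (T1 T2 : tree) : tree :=
  let T1' := relabel (fun y => if x < y then y + n - 1 else y) T1 in
  let T2' := relabel (fun y => y + x - 1) T2 in
  let r := T2' in
  if ~~ is_red r then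
    (* (W) *)
    at_x x (fun L cs => Node (rem x L ++ labels r) (cs ++ children r)) T1'
  else if is_leaf_x x T1' then
    (* (R1) *) T2'
  else if has_leaf_x x T1' then
    (* (R3) *) graft_R3 x (children r) T1'
  else
    (* (R2) *) at_x x (fun L cs => Node (rem x L) (cs ++ [:: T2'])) T1'.

Definition A_unit : tree := Node [:: 1] [::].
Definition A_mu : tree := Node [:: 1; 2] [::].
Definition A_prec : tree := Node [:: 1] [:: Node [:: 2] [::]].
Definition A_succ : tree := Node [:: 2] [:: Node [:: 1] [::]].
Definition A_odot : tree := Node [::] [:: Node [:: 1] [::]; Node [:: 2] [::]].

(* gen n T : T (up to tree equality) is an element of arity n of the
   sub-set-operad generated by A_mu, A_prec, A_succ (it contains the unit
   and is closed under partial compositions). *)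
Inductive gen : nat -> tree -> Prop :=
| gen_unit : gen 1 A_unit
| gen_mu : gen 2 A_mu
| gen_prec : gen 2 A_prec
| gen_succ : gen 2 A_succ
| gen_comp m n x T1 T2 :
    gen m T1 -> gen n T2 -> 1 <= x <= m -> gen (m + n - 1) (comp m x n T1 T2)
| gen_teq n T T' : gen n T -> teq T T' -> gen n T'.

Definition is_interval (s : seq nat) : Prop :=
  exists a b, forall k, (k \in s) = (a <= k < b).

Definition recursively_labelled (T : tree) : Prop :=
  forall s, List.In s (subtrees T) -> is_interval (all_labels s).

Definition no_empty_node (T : tree) : Prop :=
  forall s, List.In s (subtrees T) -> labels s <> [::].

(* Main.v *)
Require Import Defs.
From mathcomp Require Import all_boot zify.
From Stdlib Require List.
Set Implicit Arguments.
Unset Strict Implicit.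
Unset Printing Implicit Defensive.


Definition tree_ind' (P : tree -> Prop)
  (H : forall L cs, (forall c, List.In c cs -> P c) -> P (Node L cs)) : forall t, P t :=
  fix F t := match t with
  | Node L cs => H L cs
      ((fix G (cs : seq tree) : forall c, List.In c cs -> P c :=
         match cs return forall c, List.In c cs -> P c with
         | [::] => fun c (i : False) => match i with end
         | c0 :: cs' => fun c i => match i with
                 | or_introl e => eq_ind c0 P (F c0) c e
                 | or_intror i' => G cs' c i' end
         end) cs)
  end.

Lemma In_cat (A : Type) (x : A) s1 s2 : List.In x (s1 ++ s2) <-> List.In x s1 \/ List.In x s2.
Proof.
elim: s1 => [|y s1 IH] /=; first by split; [right|case].
rewrite IH; tauto.
Qed.

Lemma In_flatten (A B : Type) (f : A -> seq B) (y : B) s :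
  List.In y (flatten (map f s)) <-> exists x, List.In x s /\ List.In y (f x).
Proof.
elim: s => [|x s IH] /=; first by split; [|case=> ? []].
rewrite In_cat IH; split.
- case=> [h|[z [h1 h2]]]; by [exists x; split; [left|]|exists z; split; [right|]].
- case=> z [[<-|h1] h2]; [by left | right; by exists z].
Qed.

Lemma In_map (A B : Type) (f : A -> B) (y : B) s :
  List.In y (map f s) <-> exists x, List.In x s /\ y = f x.
Proof.
elim: s => [|x s IH] /=; first by split; [|case=> ? []].
rewrite IH; split.
- case=> [<-|[z [h1 ->]]]; [by exists x; split; [left|] | by exists z; split; [right|]].
- case=> z [[<-|h1] ->]; [by left | right; by exists z].
Qed.

Lemma In_split (A : Type) (x : A) s : List.In x s -> exists s1 s2, s = s1 ++ x :: s2.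
Proof.
elim: s => [|y s IH] //= [<-|/IH [s1 [s2 ->]]]; first by exists [::], s.
by exists (y :: s1), s2.
Qed.

Lemma has_In (A : Type) (a : pred A) s : has a s -> exists x, List.In x s /\ a x.
Proof. elim: s => [|y s IH] //= /orP [h|/IH [x [h1 h2]]]; [exists y|exists x]; auto. Qed.

Lemma hasn_In (A : Type) (a : pred A) s : ~~ has a s -> forall x, List.In x s -> ~~ a x.
Proof. elim: s => [|y s IH] //=; rewrite negb_or => /andP [h1 h2] x [<-|/IH]; auto. Qed.

Lemma map_In_ext (A B : Type) (f g : A -> B) s :
  (forall x, List.In x s -> f x = g x) -> map f s = map g s.
Proof. elim: s => [|y s IH] //= H; rewrite H /=; [by rewrite IH // => x hx; apply: H; right | by left]. Qed.

Lemma al_relabel h t : all_labels (relabel h t) = map h (all_labels t).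
Proof.
elim/tree_ind': t => L cs IH /=; rewrite map_cat; congr (_ ++ _).
rewrite map_flatten -!map_comp; congr flatten; apply: map_In_ext => c hc /=.
exact: IH.
Qed.

Lemma sub_relabel h t : subtrees (relabel h t) = map (relabel h) (subtrees t).
Proof.
elim/tree_ind': t => L cs IH /=; congr (_ :: _).
rewrite map_flatten -!map_comp; congr flatten; apply: map_In_ext => c hc /=.
exact: IH.
Qed.

Lemma relabel_comp f g t : relabel f (relabel g t) = relabel (f \o g) t.
Proof.
elim/tree_ind': t => L cs IH /=; congr Node; first by rewrite map_comp.
by rewrite -map_comp; apply: map_In_ext => c hc /=; apply: IH.
Qed.

Lemma relabel_id_in h t : (forall y, y \in all_labels t -> h y = y) -> relabel h t = t.
Proof.
elim/tree_ind': t => L cs IH /= H; congr Node.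
  by rewrite -[RHS]map_id; apply/eq_in_map => y hy; apply: H; rewrite mem_cat hy.
rewrite -[RHS]map_id; apply: map_In_ext => c hc; apply: IH => // y hy; apply: H.
rewrite mem_cat; apply/orP; right; case: (In_split hc) => [s1 [s2 ->]].
by rewrite map_cat flatten_cat /= !mem_cat hy orbT.
Qed.

Scheme teq_ind2 := Induction for teq Sort Prop
  with teq_list_ind2 := Induction for teq_list Sort Prop.

Lemma teq_refl t : teq t t.
Proof.
elim/tree_ind': t => L cs IH; constructor; first exact: perm_refl.
elim: cs IH => [|c cs IHl] IH; first by constructor.
apply: (teq_cons _ (cs1 := [::])); first by apply: IH; left.
by apply: IHl => x hx; apply: IH; right.
Qed.

Definition leaf k := Node [:: k] [::].

Lemma teq_leaves K K' : perm_eq K K' -> teq_list (map leaf K) (map leaf K').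
Proof.
elim: K K' => [|k K IH] K'.
  by move/perm_size; case: K' => // _; constructor.
move=> hp; have hk: k \in K' by rewrite -(perm_mem hp) mem_head.
move: hp; case: (splitPr hk) => K1 K2 hp; rewrite map_cat /=; constructor; first exact: teq_refl.
rewrite -map_cat; apply: IH.
rewrite -(perm_cons k); apply: (perm_trans hp).
by rewrite -cat1s perm_catCA.
Qed.

Definition QQ s s' := perm_eq (labels s) (labels s') /\ perm_eq (all_labels s) (all_labels s').

Definition PT t t' := perm_eq (all_labels t) (all_labels t') /\
     forall s', List.In s' (subtrees t') -> exists s, List.In s (subtrees t) /\ QQ s s'.
Definition PL cs cs' := perm_eq (flatten (map all_labels cs)) (flatten (map all_labels cs')) /\
     forall s', List.In s' (flatten (map subtrees cs')) ->
        exists s, List.In s (flatten (map subtrees cs)) /\ QQ s s'.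

Lemma teq_c1 L L' cs cs' : perm_eq L L' -> PL cs cs' -> PT (Node L cs) (Node L' cs').
Proof.
move=> hL [IH1 IH2] /=; split; first by rewrite /= perm_cat.
move=> s' [<-|/IH2 [s [h1 h2]]]; last by exists s; split; [right|].
by exists (Node L cs); split; [left|split; rewrite //= perm_cat].
Qed.

Lemma teq_c3 c c' cs cs1 cs2 : PT c c' -> PL cs (cs1 ++ cs2) -> PL (c :: cs) (cs1 ++ c' :: cs2).
Proof.
move=> [IHc1 IHc2] [IHl1 IHl2]; split.
  rewrite map_cat flatten_cat /= perm_sym perm_catCA perm_sym /=.
  rewrite perm_cat //; by rewrite map_cat flatten_cat in IHl1.
move=> s'; rewrite map_cat flatten_cat /= !In_cat => hs.
have [h|h] : List.In s' (subtrees c') \/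
    List.In s' (flatten (map subtrees (cs1 ++ cs2))).
  rewrite map_cat flatten_cat In_cat; tauto.
  case: (IHc2 _ h) => s [h1 h2]; exists s; split => //=; rewrite In_cat; tauto.
case: (IHl2 _ h) => s [h1 h2]; exists s; split => //=; rewrite In_cat; tauto.
Qed.

Lemma teq_inv t t' : teq t t' -> PT t t'.
Proof.
move=> h; refine (@teq_ind2 (fun t t' _ => PT t t') (fun cs cs' _ => PL cs cs') _ _ _ t t' h).
- by move=> *; apply: teq_c1.
- by split.
- by move=> *; apply: teq_c3.
Qed.

Lemma rem_cat_l (x : nat) s1 s2 : x \in s1 -> rem x (s1 ++ s2) = rem x s1 ++ s2.
Proof.
elim: s1 => [|y s1 IH] //=; rewrite inE eq_sym; case: eqP => //= _ h.
by rewrite IH.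
Qed.

Lemma rem_cat_r (x : nat) s1 s2 : x \notin s1 -> rem x (s1 ++ s2) = s1 ++ rem x s2.
Proof.
elim: s1 => [|y s1 IH] //=; rewrite inE negb_or eq_sym; case/andP => /negbTE -> h.
by rewrite IH.
Qed.

Lemma In_flat_perm c cs : List.In c cs ->
  exists v, perm_eq (flatten (map all_labels cs)) (all_labels c ++ v).
Proof.
move=> h; case: (In_split h) => s1 [s2 ->]; exists (flatten (map all_labels s1) ++ flatten (map all_labels s2)).
by rewrite map_cat flatten_cat /= perm_catCA.
Qed.

Lemma sub_perm s t : List.In s (subtrees t) -> exists u, perm_eq (all_labels t) (all_labels s ++ u).
Proof.
elim/tree_ind': t => L cs IH /= [<-|]; first by exists [::]; rewrite cats0.
case/In_flatten=> c [hc hs]; case: (IH c hc hs) => u hu.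
case: (In_flat_perm hc) => v hv.
exists (u ++ v ++ L).
have h1 : perm_eq (L ++ flatten (map all_labels cs)) (L ++ ((all_labels s ++ u) ++ v)).
  by rewrite perm_cat2l; apply: (perm_trans hv); rewrite perm_cat2r.
apply: (perm_trans h1); by rewrite perm_catC -!catA.
Qed.

Lemma sub_uniq s t : List.In s (subtrees t) -> uniq (all_labels t) -> uniq (all_labels s).
Proof. case/sub_perm=> u /perm_uniq ->; by rewrite cat_uniq => /andP []. Qed.

Lemma sub_mem s t k : List.In s (subtrees t) -> k \in all_labels s -> k \in all_labels t.
Proof. case/sub_perm=> u /perm_mem -> hk; by rewrite mem_cat hk. Qed.

Definition intv (S : seq nat) a b := forall k, (k \in S) = (a <= k < b).

Definition Inv n T := perm_eq (all_labels T) (iota 1 n) /\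
  (forall s, List.In s (subtrees T) -> is_interval (all_labels s) /\ labels s <> [::]).

Lemma Inv_iff n T : (RW n T /\ recursively_labelled T /\ no_empty_node T) <-> Inv n T.
Proof.
split.
  case=> [[h1 h2] [h3 h4]]; split => // s hs; split; [exact: h3 | exact: h4].
case=> h1 h2; split; [split => // s hs hL; case: (h2 s hs) => _ /(_ hL) // | split].
  by move=> s /h2 [].
by move=> s /h2 [].
Qed.

Lemma Inv_teq n T T' : Inv n T -> teq T T' -> Inv n T'.
Proof.
case=> h1 h2 /teq_inv [h3 h4]; split; first by apply: perm_trans h1; rewrite perm_sym.
move=> s' /h4 [s [hs [hl ha]]]; case: (h2 s hs) => [[a [b hab]] hne]; split.
  by exists a, b => k; rewrite -(perm_mem ha).
by move=> e; apply: hne; move/perm_size: hl; rewrite e; case: (labels s).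
Qed.

Lemma atx_id x h t : x \notin all_labels t -> at_x x h t = t.
Proof.
elim/tree_ind': t => L cs IH /=; rewrite mem_cat negb_or => /andP [/negbTE -> h2].
congr Node; rewrite -[RHS]map_id; apply: map_In_ext => c hc; apply: IH => //.
apply: contra h2 => hx; case: (In_flat_perm hc) => v /perm_mem ->; by rewrite mem_cat hx.
Qed.

Definition hW x r (L : seq nat) cs := Node (rem x L ++ labels r) (cs ++ children r).

Lemma atx_perm x r t : uniq (all_labels t) -> x \in all_labels t ->
  perm_eq (all_labels (at_x x (hW x r) t)) (rem x (all_labels t) ++ all_labels r).
Proof.
elim/tree_ind': t => L cs IH /=; case: ifP => hxL.
  move=> _ _; rewrite /hW /= rem_cat_l // map_cat flatten_cat.
  have -> : all_labels r = labels r ++ flatten (map all_labels (children r)) by case: (r).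
  by rewrite -!catA perm_cat2l perm_catCA.
rewrite mem_cat hxL /= cat_uniq => /and3P [_ _ hu] hx.
rewrite rem_cat_r ?hxL // -catA perm_cat2l.
elim: cs IH hu hx => [|c cs IHl] IH //= hu hx.
move: hu; rewrite cat_uniq => /and3P [hu1 hu2 hu3].
move: hx; rewrite mem_cat; case: (boolP (x \in all_labels c)) => hxc /= hx.
  have hxn : x \notin flatten (map all_labels cs).
    by apply: contra hu2 => h; apply/hasP; exists x.
  rewrite rem_cat_l // (_ : map (at_x x (hW x r)) cs = cs).
    rewrite -catA; apply: (@perm_trans _ ((rem x (all_labels c) ++ all_labels r) ++
       flatten [seq all_labels i | i <- cs])).
      by rewrite perm_cat2r; apply: IH => //; left.
    by rewrite -catA perm_cat2l perm_catC.
  rewrite -[RHS]map_id; apply: map_In_ext => d hd; apply: atx_id.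
  by apply: contra hxn => h; case: (In_flat_perm hd) => v /perm_mem ->; rewrite mem_cat h.
rewrite rem_cat_r // atx_id // -catA perm_cat2l; apply: IHl => // d hd; apply: IH; by right.
Qed.

Lemma sub_atx x r t s' : uniq (all_labels t) ->
  List.In s' (subtrees (at_x x (hW x r) t)) ->
  (List.In s' (subtrees t) /\ x \notin all_labels s') \/
  (exists s, List.In s (subtrees t) /\ x \in all_labels s /\ s' = at_x x (hW x r) s) \/
  List.In s' (flatten (map subtrees (children r))).
Proof.
elim/tree_ind': t => L cs IH hu /=; case: ifP => hxL.
  rewrite /hW /= map_cat flatten_cat => -[<-|].
    right; left; exists (Node L cs); split; first by left.
    by rewrite /= hxL mem_cat hxL.
  rewrite In_cat => -[h|h]; last by right; right.
  left; split; first by right.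
  case/In_flatten: h => c [hc hs]; apply/negP => hx.
  have hxc : x \in all_labels c by apply: sub_mem hs hx.
  move: hu; rewrite cat_uniq => /and3P [_ /hasP hn _]; apply: hn; exists x => //.
  by case: (In_flat_perm hc) => v /perm_mem ->; rewrite mem_cat hxc.
move=> [<-|].
  case: (boolP (x \in L ++ flatten (map all_labels cs))) => hx.
    by right; left; exists (Node L cs); split; [left|rewrite /= hxL].
  move: (@atx_id x (hW x r) (Node L cs) hx) => /=; rewrite hxL => -[e].
  rewrite e; left; split; [by left | exact: hx].
case/In_flatten=> c' /= [/In_map [c [hc ->]] hs].
have huc : uniq (all_labels c).
  move: hu; rewrite cat_uniq => /and3P [_ _]; case: (In_flat_perm hc) => v /perm_uniq ->.
  by rewrite cat_uniq => /andP [].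
case: (IH c hc huc hs) => [[h1 h2]|[[s [h1 [h2 ->]]]|h]].
- by left; split => //; right; apply/In_flatten; exists c.
- by right; left; exists s; split => //; right; apply/In_flatten; exists c.
- by right; right.
Qed.

Definition fx x n y := if x < y then y + n - 1 else y.
Definition gx x y := y + x - 1.

Lemma intv_map (h : nat -> nat) S a b a' b' : intv S a b ->
  (forall y, a <= y < b -> a' <= h y < b') ->
  (forall k, a' <= k < b' -> exists y, a <= y < b /\ k = h y) -> intv (map h S) a' b'.
Proof.
move=> hS H1 H2 k; apply/mapP/idP => [[y hy ->]|hk]; first by apply: H1; rewrite -hS.
by case: (H2 k hk) => y [hy ->]; exists y; rewrite ?hS.
Qed.

Lemma intv_empty (h : nat -> nat) S a b : intv S a b -> b <= a -> intv (map h S) 0 0.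
Proof.
move=> hS hab k; rewrite ltn0 andbF; apply/mapP => -[y]; rewrite hS => hy _; lia.
Qed.

Lemma intv_f x n S a b : 1 <= n -> intv S a b -> x \notin S -> is_interval (map (fx x n) S).
Proof.
move=> hn hS hx; case: (leqP b a) => hab; first by exists 0, 0; apply: intv_empty hS hab.
move: hx; rewrite hS => hx.
case: (leqP b x) => hbx.
  exists a, b; apply: intv_map hS _ _ => [y hy|k hk]; rewrite /fx.
    by case: ifP => h; lia.
  by exists k; split => //; case: ifP => h; lia.
exists (a + n - 1), (b + n - 1); apply: intv_map hS _ _ => [y hy|k hk]; rewrite /fx.
  by case: ifP => h; lia.
by exists (k - n + 1); split; [lia | case: ifP => h; lia].
Qed.

Lemma intv_shift c S a b : intv S a b -> is_interval (map (fun y => y + c) S).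
Proof.
move=> hS; case: (leqP b a) => hab; first by exists 0, 0; apply: intv_empty hS hab.
exists (a + c), (b + c); apply: intv_map hS _ _ => [y hy|k hk]; first lia.
by exists (k - c); split; lia.
Qed.

Lemma f_inj x n : 1 <= n -> injective (fx x n).
Proof. move=> hn y z; rewrite /fx; case: ifP; case: ifP => h1 h2; lia. Qed.

Lemma g_inj x : 1 <= x -> injective (gx x).
Proof. move=> hx y z; rewrite /gx; lia. Qed.

Lemma case2_uniq x n S0 A2 : 1 <= n -> 1 <= x -> uniq S0 -> uniq A2 ->
  (forall y, y \in A2 -> 1 <= y <= n) ->
  uniq (rem x (map (fx x n) S0) ++ map (gx x) A2).
Proof.
move=> hn hx hS hA hA2; rewrite cat_uniq rem_uniq ?map_inj_uniq ?hS ?hA //=;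
  try (by apply: f_inj); try (by apply: g_inj).
rewrite andbT; apply/hasPn => k /mapP [y /hA2 /andP [hy1 hy] ->]; rewrite mem_rem_uniq ?map_inj_uniq //; last by apply: f_inj.
rewrite inE negb_and negbK; apply/orP; case: (boolP (gx x y == x)) => h; [by left|right].
apply/mapP => -[z _]; move: h; rewrite /gx /fx; case: ifP => h1 /eqP h2 h3; lia.
Qed.

Lemma case2_intv x n S0 A2 a b : 1 <= n -> 1 <= x -> intv S0 a b -> intv A2 1 (n + 1) ->
  x \in S0 -> uniq S0 -> intv (rem x (map (fx x n) S0) ++ map (gx x) A2) a (b + n - 1).
Proof.
move=> hn hx hS hA hxS hu; have hxab := hxS; rewrite hS in hxab.
have hfu : uniq (map (fx x n) S0) by rewrite map_inj_uniq //; apply: f_inj.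
move=> k; rewrite mem_cat mem_rem_uniq // inE; apply/idP/idP.
  case/orP => [/andP [hk /mapP [y hy ->]]|/mapP [y hy ->]].
    rewrite hS in hy; move: hk; rewrite /fx; case: ifP => h1 /eqP h2; apply/andP; lia.
  rewrite hA in hy; rewrite /gx; apply/andP; lia.
move=> /andP [h1 h2].
case: (ltnP k x) => hkx.
  apply/orP; left; apply/andP; split; first by apply/eqP; lia.
  apply/mapP; exists k; [rewrite hS; lia | rewrite /fx; case: ifP => h; lia].
case: (ltnP k (x + n)) => hkx2.
  apply/orP; right; apply/mapP; exists (k - x + 1); [rewrite hA; lia | rewrite /gx; lia].
apply/orP; left; apply/andP; split; first by apply/eqP; lia.
apply/mapP; exists (k - n + 1); [rewrite hS; lia | rewrite /fx; case: ifP => h; lia].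
Qed.

Lemma intv_perm S a b : uniq S -> intv S a b -> perm_eq S (iota a (b - a)).
Proof.
move=> hu hS; apply: uniq_perm => // [|k]; first exact: iota_uniq.
by rewrite hS mem_iota; apply/idP/idP => /andP [h1 h2]; apply/andP; split; lia.
Qed.

Lemma perm_intv S n : perm_eq S (iota 1 n) -> intv S 1 (n + 1).
Proof. move=> h k; rewrite (perm_mem h) mem_iota; apply/idP/idP => /andP [h1 h2]; apply/andP; split; lia. Qed.

Lemma root_in t : List.In t (subtrees t).
Proof. by case: t => L cs; left. Qed.

Lemma labels_relabel h t : labels (relabel h t) = map h (labels t).
Proof. by case: t. Qed.

Lemma map_nil_ne (h : nat -> nat) L : L <> [::] -> map h L <> [::].
Proof. by case: L. Qed.

Lemma fx_x x n : fx x n x = x.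
Proof. by rewrite /fx ltnn. Qed.

Lemma fx_eq_x x n y : 1 <= n -> fx x n y = x -> y = x.
Proof. rewrite /fx; case: ifP => h; lia. Qed.

Lemma In_sub_child s c r : List.In c (children r) -> List.In s (subtrees c) -> List.In s (subtrees r).
Proof. case: r => L cs /= hc hs; right; apply/In_flatten; by exists c. Qed.

Lemma comp_Inv m n x T1 T2 : Inv m T1 -> Inv n T2 -> 1 <= x <= m ->
  Inv (m + n - 1) (Defs.comp m x n T1 T2).
Proof.
move=> [h1 h1s] [h2 h2s] /andP [hx1 hxm].
have hlab2 : labels T2 <> [::] by case: (h2s T2 (root_in T2)).
have hn : 1 <= n.
  move/perm_size: h2; rewrite size_iota; case: (T2) hlab2 => [[|y L] cs] //= _ <-.
  by rewrite size_cat.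
have hred : is_red (relabel (gx x) T2) = false.
  by case: (T2) hlab2 => [[|y L] cs].
have -> : Defs.comp m x n T1 T2 = at_x x (hW x (relabel (gx x) T2)) (relabel (fx x n) T1).
  by rewrite /Defs.comp hred.
set r := relabel (gx x) T2.
have hu1 : uniq (all_labels T1) by rewrite (perm_uniq h1) iota_uniq.
have hu2 : uniq (all_labels T2) by rewrite (perm_uniq h2) iota_uniq.
have hA2 : intv (all_labels T2) 1 (n + 1) by apply: perm_intv.
have hA2b : forall y, y \in all_labels T2 -> 1 <= y <= n.
  by move=> y; rewrite hA2 => /andP [a b]; apply/andP; split; lia.
have hu : uniq (all_labels (relabel (fx x n) T1)).
  by rewrite al_relabel map_inj_uniq //; apply: f_inj.
have C2 : forall s0 a b, List.In s0 (subtrees T1) -> intv (all_labels s0) a b ->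
    x \in all_labels s0 ->
    intv (all_labels (at_x x (hW x r) (relabel (fx x n) s0))) a (b + n - 1) /\
    uniq (all_labels (at_x x (hW x r) (relabel (fx x n) s0))).
  move=> s0 a b hs0 hab hxs.
  have hus : uniq (all_labels s0) by apply: sub_uniq hs0 hu1.
  have hp := @atx_perm x r (relabel (fx x n) s0).
  rewrite al_relabel map_inj_uniq in hp; last by apply: f_inj.
  have hxm' : x \in map (fx x n) (all_labels s0) by rewrite -{1}(fx_x x n) map_f.
  move: (hp hus hxm') => {}hp.
  rewrite /r al_relabel in hp; split.
    move=> k; rewrite (perm_mem hp); exact: case2_intv.
  by rewrite (perm_uniq hp); apply: case2_uniq.
split.
  have hxA : x \in all_labels T1 by rewrite (perm_mem h1) mem_iota; lia.
  case: (C2 T1 1 (m + 1) (root_in T1) (perm_intv h1) hxA) => hi hui.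
  move: (intv_perm hui hi).
  by rewrite (_ : m + 1 + n - 1 - 1 = m + n - 1) //; lia.
move=> s' hs'; case: (sub_atx hu hs') => [[h h']|[[s [h [hxs ->]]]|h]].
- move: h; rewrite sub_relabel => /In_map [s0 [hs0 e]]; subst s'.
  case: (h1s s0 hs0) => [[a [b hab]] hne]; split; last by rewrite labels_relabel; apply: map_nil_ne.
  rewrite al_relabel; apply: intv_f hab _ => //.
  apply: contra h' => hx; rewrite al_relabel -{1}(fx_x x n); exact: map_f.
- move: h; rewrite sub_relabel => /In_map [s0 [hs0 e]]; subst s.
  have hx0 : x \in all_labels s0.
    by move: hxs; rewrite al_relabel => /mapP [y hy /esym /(fx_eq_x hn) <-].
  case: (h1s s0 hs0) => [[a [b hab]] hne]; split.
    by case: (C2 s0 a b hs0 hab hx0) => hi _; exists a, (b + n - 1).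
  case: (s0) hne => L0 cs0 /= hne; case: ifP => _ /=; last by apply: map_nil_ne.
  rewrite /r labels_relabel; case: (rem _ _) => //=; by apply: map_nil_ne.
- case/In_flatten: h => c [hc hs]; have := In_sub_child hc hs.
  rewrite /r sub_relabel => /In_map [s0 [hs0 ->]].
  case: (h2s s0 hs0) => [[a [b hab]] hne]; split; last by rewrite labels_relabel; apply: map_nil_ne.
  rewrite al_relabel (_ : map (gx x) _ = map (fun y => y + (x - 1)) (all_labels s0)).
    exact: intv_shift hab.
  by apply/eq_map => y; rewrite /gx; lia.
Qed.

Lemma intv1 a : is_interval [:: a].
Proof. exists a, a.+1 => k; rewrite !inE; apply/eqP/idP => [->|h]; lia. Qed.

Lemma intv12 : is_interval [:: 1; 2].
Proof. exists 1, 3 => k; rewrite !inE; apply/orP/idP => [[]/eqP->|h] //; lia. Qed.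

Lemma intv21 : is_interval [:: 2; 1].
Proof. exists 1, 3 => k; rewrite !inE; apply/orP/idP => [[]/eqP->|h] //; lia. Qed.

Lemma gen_Inv n T : gen n T -> Inv n T.
Proof.
elim => {n T}.
- split => // s [<-|] //; split => //; exact: intv1.
- split => // s [<-|] //; split => //; exact: intv12.
- split => // s [<-|[<-|]] //; split => //; [exact: intv12 | exact: intv1].
- split => // s [<-|[<-|]] //; split => //; [exact: intv21 | exact: intv1].
- by move=> m n x T1 T2 _ h1 _ h2 hx; apply: comp_Inv.
- by move=> n T T' _ h he; apply: Inv_teq he.
Qed.

Lemma gx_prec y : relabel (gx y) A_prec = Node [:: y] [:: leaf y.+1].
Proof. rewrite /= /gx /leaf; congr (Node [:: _] [:: Node [:: _] _]); lia. Qed.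
Lemma gx_mu y : relabel (gx y) A_mu = Node [:: y; y.+1] [::].
Proof. rewrite /= /gx; congr (Node [:: _; _] _); lia. Qed.
Lemma gx_succ y : relabel (gx y) A_succ = Node [:: y.+1] [:: leaf y].
Proof. rewrite /= /gx /leaf; congr (Node [:: _] [:: Node [:: _] _]); lia. Qed.

Lemma comp_root m x n L cs T2 : is_red (relabel (gx x) T2) = false ->
  x \in map (fx x n) L ->
  Defs.comp m x n (Node L cs) T2 =
  Node (rem x (map (fx x n) L) ++ labels (relabel (gx x) T2))
       (map (relabel (fx x n)) cs ++ children (relabel (gx x) T2)).
Proof.
have e : relabel (fun y => y + x - 1) T2 = relabel (gx x) T2 by [].
move=> hr hx; rewrite /Defs.comp e hr /=.
have e2 : map (fun y => if x < y then y + n - 1 else y) L = map (fx x n) L by [].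
by rewrite e2 hx.
Qed.

Definition mx (L : seq nat) := foldr maxn 0 L.
Lemma mx_ub L z : z \in L -> z <= mx L.
Proof. elim: L => [|a L IH] //=; rewrite inE => /orP [/eqP ->|/IH h]; lia. Qed.
Lemma mx_or L : mx L = 0 \/ mx L \in L.
Proof.
elim: L => [|a L IH]; first by left.
change (maxn a (mx L) = 0 \/ maxn a (mx L) \in a :: L).
case: (leqP (mx L) a) => h.
  by right; rewrite mem_head.
case: IH => [e|e]; first lia.
by right; rewrite inE e orbT.
Qed.
Lemma mx_in L : L <> [::] -> mx L \in L.
Proof.
case: L => [|a L] // _; case: (mx_or (a :: L)) => // e.
have : a <= mx (a :: L) by apply: mx_ub; rewrite mem_head.
rewrite e leqn0 => /eqP ea; by rewrite -ea mem_head.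
Qed.

Lemma perm_iota1 S N : uniq S -> (forall k, (k \in S) = (1 <= k <= N)) -> perm_eq S (iota 1 N).
Proof.
move=> hu h; apply: uniq_perm => // [|k]; first exact: iota_uniq.
by rewrite h mem_iota; apply/idP/idP => /andP [h1 h2]; apply/andP; split; lia.
Qed.

Lemma perm_rem_rot (a : nat) S : a \in S -> perm_eq (rem a S ++ [:: a]) S.
Proof. move=> h; rewrite perm_sym; apply: (perm_trans (perm_to_rem h)); by rewrite -cat1s perm_catC. Qed.

Lemma relabel_leaves h W : map (relabel h) (map leaf W) = map leaf (map h W).
Proof. by elim: W => //= a W ->. Qed.

Lemma map_id_in' (h : nat -> nat) S : (forall z, z \in S -> h z = z) -> map h S = S.
Proof. by move=> H; rewrite -[RHS]map_id; apply/eq_in_map. Qed.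

Ltac prune := repeat match goal with
  | H : context [ tree ] |- _ => clear H
  | H : context [ seq _ ] |- _ => clear H
  | H : forall _, _ |- _ => clear H
  | H : is_true (_ \in _) |- _ => clear H
  | H : is_true (~~ (_ \in _)) |- _ => clear H
  end.
Ltac lia' := repeat match goal with | H : ?b = false |- _ => move/negbT: H => H end; prune; lia.

Lemma star_gen N L K : L <> [::] -> perm_eq (L ++ K) (iota 1 N) -> gen N (Node L (map leaf K)).
Proof.
elim: N L K => [|n IH] L K hL hp.
  by move/perm_size: hp; rewrite size_cat; case: L hL.
have hu : uniq (L ++ K) by rewrite (perm_uniq hp) iota_uniq.
have hm : forall k, (k \in L ++ K) = (1 <= k <= n.+1).
  move=> k; rewrite (perm_mem hp) mem_iota; apply/idP/idP => /andP [h1 h2]; apply/andP; split; lia'.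
move: hu; rewrite cat_uniq => /and3P [uL /hasPn dis uK].
have disj : forall k, k \in K -> k \notin L by move=> k /dis.
have hmL : forall k, k \in L -> 1 <= k <= n.+1 by move=> k hk; rewrite -hm mem_cat hk.
have hmK : forall k, k \in K -> 1 <= k <= n.+1 by move=> k hk; rewrite -hm mem_cat hk orbT.
case: n IH hp hm hmL hmK => [|n] IH hp hm hmL hmK.
  move/perm_size: (hp); rewrite size_cat /=.
  case: L hL hp hm hmL hmK {uL dis disj} => [|a [|b L]] //= _; case: K {uK} => //= hp hm hmL hmK _.
  have : a = 1 by have := hmL a; rewrite mem_head => /(_ isT); lia'.
  by move=> ->; exact: gen_unit.
set y := mx L.
have hyL : y \in L by apply: mx_in.
have hub : forall z, z \in L -> z <= y by move=> z; apply: mx_ub.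
have hy := hmL y hyL.
case: (ltnP y n.+2) => hyN.
-
  have hyK : y.+1 \in K.
    have : y.+1 \in L ++ K by rewrite hm; lia'.
    rewrite mem_cat => /orP [/hub|//]; lia'.
  set K' := rem y.+1 K.
  have hK' : forall w, (w \in K') = (w != y.+1) && (w \in K) by move=> w; rewrite mem_rem_uniq.
  set dec := fun z => if y.+1 < z then z - 1 else z.
  have IH1 : gen n.+1 (Node L (map leaf (map dec K'))).
    apply: IH => //; apply: perm_iota1.
      rewrite cat_uniq uL /=; apply/andP; split.
        apply/hasPn => z /mapP [w]; rewrite hK' => /andP [/eqP hw1 hw2] ->.
        rewrite /dec; case: ifP => h.
          by apply/negP => /hub; have := hmK w hw2; lia'.
        exact: disj.
      rewrite map_inj_in_uniq ?rem_uniq // => w1 w2; rewrite !hK' /dec.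
      move=> /andP [/eqP a1 _] /andP [/eqP a2 _]; case: ifP; case: ifP => b1 b2; lia'.
    move=> k; rewrite mem_cat; apply/idP/idP.
      case/orP => [hk|/mapP [w]]; first by have := hmL k hk; have := hub k hk; lia'.
      rewrite hK' => /andP [/eqP hw1 /hmK hw2] ->; rewrite /dec; case: ifP => h; lia'.
    move=> hk; case: (leqP k y) => hky.
      have : k \in L ++ K by rewrite hm; lia'.
      rewrite mem_cat => /orP [->//|hkK]; apply/orP; right; apply/mapP; exists k.
        by rewrite hK' hkK andbT; apply/eqP; lia'.
      by rewrite /dec; case: ifP => h; lia'.
    have : k.+1 \in L ++ K by rewrite hm; lia'.
    rewrite mem_cat => /orP [/hub|hkK]; first lia'.
    apply/orP; right; apply/mapP; exists k.+1.
      by rewrite hK' hkK andbT; apply/eqP; lia'.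
    by rewrite /dec; case: ifP => h; lia'.
  have hc := gen_comp IH1 gen_prec (x := y) ltac:(apply/andP; split; lia').
  have emL : map (fx y 2) L = L by apply: map_id_in' => z /hub h; rewrite /fx; case: ifP => h'; lia'.
  rewrite comp_root ?gx_prec ?emL // relabel_leaves in hc.
  have eK : map (fx y 2) (map dec K') = K'.
    rewrite -map_comp; apply: map_id_in' => w; rewrite hK' => /andP [/eqP hw1 hw2] /=.
    have hwL := disj w hw2.
    rewrite /dec; case: ifP => h1; rewrite /fx; case: ifP => h2; lia'.
  rewrite eK (_ : n.+1 + 2 - 1 = n.+2) in hc; last lia'.
  apply: (gen_teq hc); constructor; first exact: perm_rem_rot.
  rewrite /= (_ : [:: leaf y.+1] = map leaf [:: y.+1]) // -map_cat.
  by apply: teq_leaves; apply: perm_rem_rot.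
- have eyN : y = n.+2 by lia'.
  have hn1 : n.+1 \in L ++ K by rewrite hm; lia'.
  have hLy : forall z, z \in rem y L -> z <= n.+1.
    move=> z; rewrite mem_rem_uniq // => /andP [/eqP h1 /hub h2]; lia'.
  have hKy : forall z, z \in K -> z <= n.+1.
    move=> z hz; have := hmK z hz; have := disj z hz => hzL h; apply/negP => hh.
    have ez : z = y by lia'.
    by move: hzL; rewrite ez hyL.
  move: hn1; rewrite mem_cat => /orP [hn1|hn1].
  +
    have hn1' : n.+1 \in rem y L by rewrite mem_rem_uniq // inE hn1 andbT; apply/eqP; lia'.
    have IH1 : gen n.+1 (Node (rem y L) (map leaf K)).
      apply: IH; first by move=> e; rewrite e in hn1'.
      apply: perm_iota1.
        by rewrite cat_uniq rem_uniq ?uK //= andbT; apply/hasPn => z /disj; apply: contra; apply: mem_rem.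
      move=> k; rewrite mem_cat; apply/idP/idP.
        case/orP => [hk|hk]; [have := hLy k hk; have := hmL k (mem_rem hk)|
                              have := hKy k hk; have := hmK k hk]; lia'.
      move=> hk; have : k \in L ++ K by rewrite hm; lia'.
      rewrite mem_cat => /orP [h|->]; last by rewrite orbT.
      by rewrite mem_rem_uniq // inE h andbT; apply/orP; left; apply/eqP; lia'.
    have hc := gen_comp IH1 gen_mu (x := n.+1) ltac:(apply/andP; split; lia').
    have emL : map (fx n.+1 2) (rem y L) = rem y L.
      by apply: map_id_in' => z /hLy h; rewrite /fx; case: ifP => h'; lia'.
    have emK : map (fx n.+1 2) K = K.
      by apply: map_id_in' => z /hKy h; rewrite /fx; case: ifP => h'; lia'.
    rewrite comp_root ?gx_mu ?emL // relabel_leaves emK in hc.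
    rewrite (_ : n.+1 + 2 - 1 = n.+2) /= in hc; last lia'.
    have e0 : forall (s : seq tree), s ++ [::] = s by move=> s; elim: s => //= a s ->.
    rewrite e0 in hc.
    apply: (gen_teq hc); constructor; last by apply: teq_leaves.
    rewrite -eyN; apply: (perm_trans _ (perm_rem_rot hyL)).
    rewrite (_ : [:: n.+1; y] = [:: n.+1] ++ [:: y]) // catA perm_cat2r.
    exact: perm_rem_rot.
  +
    have IH1 : gen n.+1 (Node (n.+1 :: rem y L) (map leaf (rem n.+1 K))).
      apply: IH => //; apply: perm_iota1.
        rewrite cat_uniq /= rem_uniq ?uK ?rem_uniq ?uL // andbT.
        rewrite andbT; apply/andP; split; first by apply: contra (disj _ hn1); apply: mem_rem.
        apply/hasPn => z; rewrite mem_rem_uniq // inE => /andP [hz1 hz2].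
        by rewrite inE negb_or hz1 /=; apply: contra (disj z hz2); apply: mem_rem.
      move=> k; rewrite mem_cat inE; apply/idP/idP.
        case/orP => [/orP [/eqP ->|hk]|hk]; first lia'.
          by have := hLy k hk; have := hmL k (mem_rem hk); lia'.
        by have := hKy k (mem_rem hk); have := hmK k (mem_rem hk); lia'.
      move=> hk; case: (boolP (k == n.+1)) => //= hkn.
      have : k \in L ++ K by rewrite hm; lia'.
      rewrite mem_cat => /orP [h|h].
        by rewrite mem_rem_uniq // inE h andbT; apply/orP; left; apply/eqP; lia'.
      by apply/orP; right; rewrite mem_rem_uniq // inE h hkn.
    have hc := gen_comp IH1 gen_succ (x := n.+1) ltac:(apply/andP; split; lia').
    have emL : map (fx n.+1 2) (n.+1 :: rem y L) = n.+1 :: rem y L.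
      apply: map_id_in' => z; rewrite inE => /orP [/eqP ->|/hLy h]; rewrite /fx; case: ifP => h'; lia'.
    have emK : map (fx n.+1 2) (rem n.+1 K) = rem n.+1 K.
      by apply: map_id_in' => z /mem_rem /hKy h; rewrite /fx; case: ifP => h'; lia'.
    rewrite comp_root ?gx_succ ?emL ?mem_head // relabel_leaves emK in hc.
    rewrite (_ : n.+1 + 2 - 1 = n.+2) /= ?eqxx in hc; last lia'.
    apply: (gen_teq hc); constructor.
      by rewrite -eyN; apply: perm_rem_rot.
    rewrite (_ : [:: leaf n.+1] = map leaf [:: n.+1]) // -map_cat.
    by apply: teq_leaves; apply: perm_rem_rot.
Qed.

Lemma comp_W m x n T1 T2 : labels T2 <> [::] ->
  Defs.comp m x n T1 T2 = at_x x (hW x (relabel (gx x) T2)) (relabel (fx x n) T1).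
Proof.
move=> hl; have hred : is_red (relabel (gx x) T2) = false by case: T2 hl => [[|y L] cs].
by rewrite /Defs.comp hred.
Qed.

Definition sh a b y := if y < b then y else y - (b - a - 1).

Lemma intv_sh a b S a' b' : a < b -> intv S a' b' -> (forall y, y \in S -> y < a \/ b <= y) ->
  is_interval (map (sh a b) S).
Proof.
move=> hab hS hout; case: (leqP b' a') => h0; first by exists 0, 0; apply: intv_empty hS h0.
case: (leqP b' a) => h1.
  exists a', b'; apply: intv_map hS _ _ => [y hy|k hk]; rewrite /sh.
    by case: ifP => h; lia'.
  by exists k; split => //; case: ifP => h; lia'.
case: (leqP b a') => h2.
  exists (a' - (b - a - 1)), (b' - (b - a - 1)); apply: intv_map hS _ _ => [y hy|k hk]; rewrite /sh.
    by case: ifP => h; lia'.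
  by exists (k + (b - a - 1)); split; [lia' | case: ifP => h; lia'].
have : maxn a a' \in S by rewrite hS; apply/andP; split; lia'.
by move/hout; lia'.
Qed.

Lemma intv_down c S a' b' : intv S a' b' -> (forall y, y \in S -> c <= y) ->
  is_interval (map (fun y => y - c) S).
Proof.
move=> hS hc; case: (leqP b' a') => h0; first by exists 0, 0; apply: intv_empty hS h0.
have ha' : c <= a' by apply: hc; rewrite hS; apply/andP; split; lia'.
exists (a' - c), (b' - c); apply: intv_map hS _ _ => [y hy|k hk]; first lia'.
by exists (k + c); split; lia'.
Qed.

Lemma flatten_leaves K : flatten (map all_labels (map leaf K)) = K.
Proof. by elim: K => //= k K ->. Qed.

Lemma leaves_eq cs : (forall c, List.In c cs -> exists k, c = leaf k) ->
  cs = map leaf (map (fun c => head 0 (labels c)) cs).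
Proof.
elim: cs => //= c cs IH H; case: (H c (or_introl erefl)) => k ->; congr (_ :: _).
by apply: IH => d hd; apply: H; right.
Qed.

Lemma flat_relabel h cs :
  flatten (map all_labels (map (relabel h) cs)) = map h (flatten (map all_labels cs)).
Proof. by elim: cs => //= c cs ->; rewrite al_relabel map_cat. Qed.

Lemma sub_child L cs c s : List.In c cs -> List.In s (subtrees c) -> List.In s (subtrees (Node L cs)).
Proof. by move=> hc hs; right; apply/In_flatten; exists c. Qed.



Lemma Inv_gen N : forall n T, n <= N -> Inv n T -> gen n T.
Proof.
elim: N => [|N IHN] n [L cs] hnN [hp hs].
  have hL : L <> [::] by case: (hs _ (root_in (Node L cs))).
  by move/perm_size: hp; rewrite size_iota (_ : n = 0) ?size_cat; [case: (L) hL | lia].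
have hL : L <> [::] by case: (hs _ (root_in (Node L cs))).
have hu : uniq (all_labels (Node L cs)) by rewrite (perm_uniq hp) iota_uniq.
have hmT : forall k, (k \in all_labels (Node L cs)) = (1 <= k <= n).
  move=> k; rewrite (perm_mem hp) mem_iota; apply/idP/idP => /andP [h1 h2]; apply/andP; split; lia'.
case: (boolP (has (fun c => 1 < size (all_labels c)) cs)) => hh.
- case: (has_In hh) => c [hc hc2].
  case: (hs c (sub_child L hc (root_in c))) => [[a [b hab]] hcl].
  have huc : uniq (all_labels c) by apply: sub_uniq hu; apply: sub_child hc (root_in c).
  have hpc := intv_perm huc hab.
  set k := b - a.
  have ek : k = b - a by [].
  have hk : 2 <= k by move: hc2; rewrite (perm_size hpc) size_iota.
  have hca : forall y, y \in all_labels c -> 1 <= y <= n.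
    by move=> y hy; rewrite -hmT; apply: sub_mem hy; apply: sub_child hc (root_in c).
  have ha1 : 1 <= a by have := hca a; rewrite hab => /(_ ltac:(apply/andP; split; lia')); lia'.
  have hbn : b <= n.+1 by have := hca b.-1; rewrite hab => /(_ ltac:(apply/andP; split; lia')); lia'.
  case: (In_split hc) => cs1 [cs2 ecs]; subst cs.
  set O := L ++ flatten (map all_labels (cs1 ++ cs2)).
  have hpermT : perm_eq (all_labels (Node L (cs1 ++ c :: cs2))) (all_labels c ++ O).
    by rewrite /O /= !map_cat !flatten_cat /= perm_sym perm_catCA perm_cat2l perm_catCA.
  have huO : uniq (all_labels c ++ O) by rewrite -(perm_uniq hpermT).
  move: (huO); rewrite cat_uniq => /and3P [_ /hasPn hdis uO].
  have hO : forall y, y \in O -> (y < a \/ b <= y) /\ 1 <= y <= n.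
    move=> y hy; split; last by rewrite -hmT (perm_mem hpermT) mem_cat hy orbT.
    have := hdis y hy; rewrite hab; lia'.
  have hOc : forall y, 1 <= y <= n -> y < a \/ b <= y -> y \in O.
    move=> y h1 h2; move: h1; rewrite -hmT (perm_mem hpermT) mem_cat hab.
    case/orP => // /andP [h3 h4]; lia'.
  have hdO : forall d y, List.In d (cs1 ++ cs2) -> y \in all_labels d -> y \in O.
    move=> d y hd hy; rewrite /O mem_cat; apply/orP; right.
    by case: (In_flat_perm hd) => v /perm_mem ->; rewrite mem_cat hy.
  have hLO : forall y, y \in L -> y \in O by move=> y hy; rewrite /O mem_cat hy.
  have hsizeO : 1 <= size O by rewrite /O size_cat; case: (L) hL.
  have hnk : n = k + size O.
    by move/perm_size: hp; rewrite (perm_size hpermT) size_iota size_cat (perm_size hpc) size_iota.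
  set m := n - k + 1.
  have em : m = n - k + 1 by [].
  set T1 := Node (map (sh a b) L)
       (map (relabel (sh a b)) cs1 ++ leaf a :: map (relabel (sh a b)) cs2).
  set T2 := relabel (fun y => y - (a - 1)) c.
  have hfs : forall y, y \in O -> fx a k (sh a b y) = y.
    by move=> y /hO [[h|h] h']; rewrite /sh; case: ifP => h1; rewrite /fx; case: ifP => h2; lia'.
  have e : Defs.comp m a k T1 T2 = Node L (cs1 ++ c :: cs2).
    rewrite comp_W; last by rewrite /T2 labels_relabel; apply: map_nil_ne.
    have -> : relabel (gx a) T2 = c.
      rewrite /T2 relabel_comp; apply: relabel_id_in => y hy /=.
      by have := hab y; rewrite hy /gx => /esym; lia'.
    have -> : relabel (fx a k) T1 = Node L (cs1 ++ leaf a :: cs2).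
      rewrite /T1 /= -map_comp map_id_in' => [|y hy]; last by apply: hfs; apply: hLO.
      rewrite map_cat /= fx_x -!map_comp.
      congr (Node _ (_ ++ _ :: _)); rewrite -[RHS]map_id; apply: map_In_ext => d hd /=;
        rewrite relabel_comp; apply: relabel_id_in => y hy /=; apply: hfs; apply: (hdO d);
        rewrite // In_cat; tauto.
    have haL : (a \in L) = false.
      apply/negP => /hLO /hdis; rewrite hab; lia'.
    rewrite /= haL map_cat /= mem_head /hW /= eqxx /=.
    have hid : forall s, (forall d, List.In d s -> List.In d (cs1 ++ cs2)) ->
        map (at_x a (fun L0 cs0 => Node (rem a L0 ++ labels c) (cs0 ++ children c))) s = s.
      move=> s hsd; rewrite -[RHS]map_id; apply: map_In_ext => d hd; apply: atx_id.
      apply/negP => hy; have := hdis a (hdO d a (hsd d hd) hy); rewrite hab; lia'.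
    rewrite !hid => [|d hd|d hd]; try (rewrite In_cat; tauto).
    by case: (c).
  have IN1 : Inv m T1.
    have hpT1 : perm_eq (all_labels T1) (a :: map (sh a b) O).
      rewrite /T1 /O /= map_cat flatten_cat /= !flat_relabel !map_cat map_flatten.
      rewrite flatten_cat map_cat -map_flatten.
      by rewrite catA -cat1s perm_catCA /= -catA.
    have hpT1' : perm_eq (all_labels T1) (iota 1 m).
      apply: (perm_trans hpT1); apply: perm_iota1.
        rewrite /= map_inj_in_uniq ?uO ?andbT; last first.
          move=> y z /hO [hy1 hy2] /hO [hz1 hz2]; rewrite /sh; case: ifP; case: ifP => h1 h2; lia'.
        apply/mapP => -[y /hO [hy1 hy2]]; rewrite /sh; case: ifP => h1; lia'.
      move=> k'; rewrite inE; apply/idP/idP.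
        case/orP => [/eqP ->|/mapP [y /hO [hy1 hy2] ->]]; first lia'.
        rewrite /sh; case: ifP => h1; lia'.
      move=> hk'; case: (ltngtP k' a) => hka.
      + apply/orP; right; apply/mapP; exists k'; last by rewrite /sh; case: ifP => h; lia'.
        by apply: hOc; lia'.
      + apply/orP; right; apply/mapP; exists (k' + k - 1); last by rewrite /sh; case: ifP => h; lia'.
        by apply: hOc; lia'.
      + by rewrite ?hka ?eqxx.
    split => // s; rewrite /T1 => -[<-|].
      split; last by apply: map_nil_ne.
      by exists 1, (m + 1); apply: perm_intv.
    case/In_flatten => d; rewrite In_cat => -[[hd|[<-|hd]] hs'].
    + change (List.In s (subtrees d)) in hs'.
      move/In_map: hd => [d0 [hd0 ed]]; subst d.
 move: hs'; rewrite sub_relabel => /In_map [s0 [hs0 ->]].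
      have hd0' : List.In d0 (cs1 ++ cs2) by rewrite In_cat; tauto.
      case: (hs s0 (sub_child L (ltac:(rewrite In_cat /=; tauto) : List.In d0 (cs1 ++ c :: cs2)) hs0))
        => [[a' [b' hab']] hne].
      split; last by rewrite labels_relabel; apply: map_nil_ne.
      rewrite al_relabel; apply: intv_sh hab' _; first lia'.
      move=> y hy; case: (hO y (hdO d0 y hd0' (sub_mem hs0 hy))) => //.
    + by case: hs' => // <-; split => //; apply: intv1.
    + change (List.In s (subtrees d)) in hs'.
      move/In_map: hd => [d0 [hd0 ed]]; subst d.
      move: hs'; rewrite sub_relabel => /In_map [s0 [hs0 ->]].
      have hd0' : List.In d0 (cs1 ++ cs2) by rewrite In_cat; tauto.
      case: (hs s0 (sub_child L (ltac:(rewrite In_cat /=; tauto) : List.In d0 (cs1 ++ c :: cs2)) hs0))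
        => [[a' [b' hab']] hne].
      split; last by rewrite labels_relabel; apply: map_nil_ne.
      rewrite al_relabel; apply: intv_sh hab' _; first lia'.
      move=> y hy; case: (hO y (hdO d0 y hd0' (sub_mem hs0 hy))) => //.
  have IN2 : Inv k T2.
    split.
      rewrite /T2 al_relabel; apply: perm_iota1.
        rewrite map_inj_in_uniq // => y z; rewrite !hab => /andP [y1 y2] /andP [z1 z2]; lia'.
      move=> k'; apply/mapP/idP => [[y]|hk']; first by rewrite hab => /andP [y1 y2] ->; lia'.
      by exists (k' + a - 1); [rewrite hab; lia' | lia'].
    move=> s; rewrite /T2 sub_relabel => /In_map [s0 [hs0 ->]].
    case: (hs s0 (sub_child L hc hs0)) => [[a' [b' hab']] hne].
    split; last by rewrite labels_relabel; apply: map_nil_ne.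
    rewrite al_relabel; apply: intv_down hab' _ => y hy.
    have := hab y; rewrite (sub_mem hs0 hy) => /esym; lia'.
  have g1 : gen m T1 by apply: IHN IN1; lia'.
  have g2 : gen k T2 by apply: IHN IN2; lia'.
  have := gen_comp g1 g2 (x := a) ltac:(apply/andP; split; lia').
  by rewrite e (_ : m + k - 1 = n) //; lia'.
- have hleaf : forall c, List.In c cs -> exists k, c = leaf k.
    move=> c hc; have := hasn_In hh hc; rewrite -ltnNge ltnS => hsz.
    case: (hs _ (sub_child L hc (root_in _))) => _ hne.
    case: c hc hsz hne => Lc csc hc hsz hne.
    have hcsc : csc = [::].
      case: csc hc hsz hne => // d csc hc hsz hne.
      have hd : List.In d (subtrees (Node Lc (d :: csc))).
        by right; apply/In_cat; left; apply: root_in.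
      case: (hs d (sub_child L hc hd)) => _.
      move: hsz hne; rewrite /= !size_cat; case: (d) => [[|z Ld] csd] //=; case: (Lc) => //= a l.
      by rewrite !addSn !addnS.
    move: hc hsz hne; rewrite hcsc /= size_cat /= addn0.
    by case: Lc => [|k [|k2 Lc]] //= hc _ _; exists k.
  rewrite (leaves_eq hleaf); apply: star_gen => //.
  by rewrite -(flatten_leaves (map _ cs)) -(leaves_eq hleaf).
Qed.

Theorem mainTheorem10 (n : nat) (T : tree) :
  gen n T <-> (RW n T /\ recursively_labelled T /\ no_empty_node T).
Proof.
rewrite Inv_iff; split; first exact: gen_Inv.
by move=> h; apply: (Inv_gen (leqnn n)).
Qed.
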